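(* Let $G_{P,\mathcal{K}'}$ be the closure under R1–R4 of a pattern $P$ with consistent background knowledge $\mathcal{K}'$. Suppose $a_m - b$ is undirected in $G_{P,\mathcal{K}'}$ for $m=1,\dots,M$, and some consistent DAG extension of $G_{P,\mathcal{K}'}$ contains $a_m\to b$ for all $m\le M$. Orient $a_m\to b$ for all $m\le M$ and then close the orientations under R1–R4. Then for every edge $a'\to b'$ oriented during this closure, $b'$ is a descendant of $b$ in the resulting PDAG.
   Context: A PDAG is a graph with directed and undirected edges and no directed cycle. The pattern of a DAG is the graph with the same skeleton in which an edge is directed iff it belongs to a v-structure (a triple $a\to c\leftarrow b$ with $a,b$ non-adjacent). A consistent DAG extension of a PDAG $G$ is a DAG with the same skeleton, the same orientation of every directed edge of $G$, and no v-structures other than those of $G$. A set $\mathcal{K}$ of orientations of undirected edges of $P$ is consistent background knowledge if some DAG with pattern $P$ contains all of them. $G_{P,\mathcal{K}}$ is obtained from $P$ by orienting the edges in $\mathcal{K}$ and then repeatedly applying until none applies: R1: if $k\to i$, $i - j$, $k,j$ non-adjacent, orient $i\to j$; R2: if $i\to k\to j$ and $i - j$, orient $i\to j$; R3: if $i - k$, $i - l$, $i - j$, $k\to j$, $l\to j$, $k,l$ non-adjacent, orient $i\to j$; R4: if $i - k$, $i - l$, $i - j$, $k\to l\to j$, $k,j$ non-adjacent, orient $i\to j$. Descendants are taken along directed edges; every node is a descendant of itself. *)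

(* Defs.v *)
(* A (partially directed) graph on a finite vertex type T is
   encoded by a boolean relation G : rel T (adjacency-matrix encoding):
     x -> y  iff  G x y && ~~ G y x
     x -  y  iff  G x y && G y x
     x, y adjacent iff G x y || G y x. *)
From mathcomp Require Import all_boot.
Set Implicit Arguments. Unset Strict Implicit. Unset Printing Implicit Defensive.

Section Graphs.
Variable T : finType.
Implicit Types (G D P K : rel T).

Definition dir G : rel T := fun x y => G x y && ~~ G y x.
Definition und G : rel T := fun x y => G x y && G y x.
Definition adj G : rel T := fun x y => G x y || G y x.

Definition is_dag D : Prop :=
  [/\ forall x, ~~ D x x,
      forall x y, ~~ (D x y && D y x)
    & forall x y, D x y -> ~~ connect D y x].

Definition vstruct G (a c b : T) : bool :=
  [&& dir G a c, dir G b c, a != b & ~~ adj G a b].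

Definition in_vstruct G (x y : T) : bool := [exists z, vstruct G x y z].

(* pattern of a DAG: same skeleton, edge directed iff it belongs to a v-structure *)
Definition pattern D : rel T :=
  fun x y => adj D x y && ~~ (D y x && in_vstruct D y x).

Definition has_pattern D P : Prop := is_dag D /\ forall x y, P x y = pattern D x y.

Definition consistent_extension D G : Prop :=
  [/\ is_dag D,
      forall x y, adj D x y = adj G x y,
      forall x y, dir G x y -> D x y
    & forall a c b, vstruct D a c b -> vstruct G a c b].

(* K (K x y = "orient x -> y") is consistent background knowledge for P *)
Definition consistent_bk P K : Prop :=
  (forall x y, K x y -> und P x y) /\
  exists D, has_pattern D P /\ forall x y, K x y -> D x y.

Definition orient G (i j : T) : rel T :=
  fun x y => if (x == i) && (y == j) then true
             else if (x == j) && (y == i) then false else G x y.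

Definition orientK P K : rel T :=
  fun x y => if K x y then true else if K y x then false else P x y.

(* Meek rules: conditions under which the undirected edge i - j gets i -> j *)
Definition R1 G (i j : T) : Prop := exists k, dir G k i /\ ~~ adj G k j.
Definition R2 G (i j : T) : Prop := exists k, dir G i k /\ dir G k j.
Definition R3 G (i j : T) : Prop :=
  exists k l, [/\ und G i k, und G i l, dir G k j, dir G l j & (k != l) && ~~ adj G k l].
Definition R4 G (i j : T) : Prop :=
  exists k l, [/\ und G i k, und G i l, dir G k l, dir G l j & ~~ adj G k j].

Definition rule_applies G i j : Prop :=
  und G i j /\ (R1 G i j \/ R2 G i j \/ R3 G i j \/ R4 G i j).

Inductive rule_reach : rel T -> rel T -> Prop :=
| rr_refl G H : (forall x y, G x y = H x y) -> rule_reach G H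
| rr_step G i j H : rule_applies G i j -> rule_reach (orient G i j) H -> rule_reach G H.

Definition meek_closure G H : Prop :=
  rule_reach G H /\ forall i j, ~ rule_applies H i j.

Definition orient_all G (s : seq T) (b : T) : rel T :=
  foldr (fun a H => orient H a b) G s.

End Graphs.

(* Main.v *)
Require Import Defs.
From mathcomp Require Import all_boot.
Set Implicit Arguments. Unset Strict Implicit.

Section L.
Variable T : finType.
Implicit Types (H : rel T).

Ltac destr H := repeat match goal with
  | |- context[H ?u ?v] => case: (H u v)
  end.

Ltac brute H := rewrite /und /dir /adj /orient;
  repeat (case: eqP => [?|?]; subst => //=); destr H; try by [].

Lemma orient_und H a c x y : adj H a c -> und (orient H a c) x y -> und H x y.
Proof. brute H. Qed.

Lemma orient_adj H a c x y : adj H a c -> adj (orient H a c) x y = adj H x y.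
Proof. brute H. Qed.

Lemma orient_dir H a c x y : dir (orient H a c) x y -> dir H x y \/ (x = a /\ y = c).
Proof. brute H; auto. Qed.

Lemma orient_dir_mono H a c x y : und H a c -> dir H x y -> dir (orient H a c) x y.
Proof. brute H. Qed.

Lemma orient_dir_new H a c : a != c -> dir (orient H a c) a c.
Proof. brute H. Qed.

Lemma lift_connect (e e' : rel T) x y : (forall u v, e u v -> e' u v) ->
  connect e x y -> connect e' x y.
Proof. move=> He; apply: connect_sub => u v /He; exact: connect1. Qed.

Lemma oall_props (G1 : rel T) s b :
  (forall a, a \in s -> adj G1 a b) ->
  (forall x y, adj (orient_all G1 s b) x y = adj G1 x y) /\
  (forall x y, und (orient_all G1 s b) x y -> und G1 x y) /\
  (forall x y, dir (orient_all G1 s b) x y -> dir G1 x y \/ y = b).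
Proof.
elim: s => [|a s IH] Hs /=; first by split=> //; split=> //; auto.
have Hs' : forall x, x \in s -> adj G1 x b by move=> x h; apply: Hs; rewrite inE h orbT.
have [IA [IU ID]] := IH Hs'.
have Hab : adj (orient_all G1 s b) a b by rewrite IA; apply: Hs; rewrite inE eqxx.
split; [|split].
- by move=> x y; rewrite orient_adj.
- by move=> x y /orient_und -/(_ Hab) /IU.
- by move=> x y /orient_dir [/ID|[_ ->]]; auto.
Qed.

Lemma rule_neq H i j : rule_applies H i j -> i != j.
Proof.
case=> _; apply: contraPneq => <-.
rewrite /R1 /R2 /R3 /R4 /dir /und /adj.
case=> [[k [/andP[h1 _]] ]|[[k [/andP[_ h1] /andP[h2 _]]]|[[k [l [/andP[h1 _] _ /andP[_ h2] _ _]]]|[k [l [_ /andP[h1 _] _ /andP[_ h2] _]]]]]].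
- by rewrite h1.
- by rewrite h2 in h1.
- by rewrite h1 in h2.
- by rewrite h1 in h2.
Qed.

Section Main.
Variables (G1 G2 : rel T) (b : T).
Hypothesis closed : forall i j, ~ rule_applies G1 i j.
Hypothesis G2u : forall x y, und G2 x y -> und G1 x y.

Definition Inv H := forall x y, und G2 x y -> dir H x y -> connect (dir H) b y.
Definition Facts H :=
  [/\ forall x y, und H x y -> und G2 x y,
      forall x y, dir H x y -> [\/ dir G1 x y, y = b | und G2 x y]
    & forall x y, adj H x y = adj G1 x y].

Lemma chain H H3 : rule_reach H H3 -> Facts H -> Inv H -> Inv H3.
Proof.
elim=> {H H3} [H H3 E|H i j H3 Hr _ IH] [F4 F2 F3] Inv0.
  move=> x y u d.
  have E' : dir H =2 dir H3 by move=> p q; rewrite /dir !E.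
  have d' : dir H x y by rewrite E'.
  by rewrite -(eq_connect E'); apply: Inv0 u d'.
have ij := rule_neq Hr.
have [uij Rr] := Hr.
set H' := orient H i j.
have mono : forall x y, dir H x y -> dir H' x y by move=> x y; apply: orient_dir_mono.
have new : dir H' i j by apply: orient_dir_new.
have lift : forall y, connect (dir H) b y -> connect (dir H') b y.
  by move=> y; apply: lift_connect.
have ext : forall u, connect (dir H') b u -> dir H' u j -> connect (dir H') b j.
  by move=> u c e; apply: connect_trans c (connect1 e).
have G1u : forall x y, und H x y -> und G1 x y by move=> x y /F4 /G2u.
apply: IH.
  split.
  - by move=> x y /orient_und -/(_ (introT orP (or_introl (andP uij).1))) /F4.
  - move=> x y /orient_dir [/F2 //|[-> ->]]; by constructor 3; apply: F4.
  - by move=> x y; rewrite orient_adj // /adj (andP uij).1.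
move=> x y u /orient_dir [d|[_ ->]].
  by apply: lift; apply: (Inv0 x y u d).
case: Rr => [[k [dk nk]]|[[k [d1 d2]]|[[k [l [u1 u2 d1 d2 nkl]]]|[k [l [u1 u2 d1 d2 nk]]]]]].
- case: (F2 _ _ dk) => [g|ei|g].
  + exfalso; apply: (@closed i j); split; first exact: G1u.
    by left; exists k; split => //; rewrite -F3.
  + by rewrite -{1}ei; exact: connect1 new.
  + by apply: ext new; apply: lift; apply: Inv0 g dk.
- case: (F2 _ _ d2) => [g2|->|g2]; last by apply: lift; apply: Inv0 g2 d2.
  2: exact: connect0.
  case: (F2 _ _ d1) => [g1|<-|g1].
  + exfalso; apply: (@closed i j); split; first exact: G1u.
    by right; left; exists k.
  + exact: connect1 (mono _ _ d2).
  + by apply: ext (mono _ _ d2); apply: lift; apply: Inv0 g1 d1.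
- case: (F2 _ _ d1) => [g1|->|g1]; last by apply: lift; apply: Inv0 g1 d1.
  2: exact: connect0.
  case: (F2 _ _ d2) => [g2|->|g2]; last by apply: lift; apply: Inv0 g2 d2.
  2: exact: connect0.
  exfalso; apply: (@closed i j); split; first exact: G1u.
  right; right; left; exists k, l; split; rewrite ?G1u // -?F3 //.
- case: (F2 _ _ d2) => [g2|->|g2]; last by apply: lift; apply: Inv0 g2 d2.
  2: exact: connect0.
  case: (F2 _ _ d1) => [g1|<-|g1].
  + exfalso; apply: (@closed i j); split; first exact: G1u.
    right; right; right; exists k, l; split; rewrite ?G1u // -?F3 //.
  + exact: connect1 (mono _ _ d2).
  + by apply: ext (mono _ _ d2); apply: lift; apply: Inv0 g1 d1.
Qed.
End Main.
End L.

Theorem mainTheorem16 (T : finType) (P K' G1 : rel T) (s : seq T) (b : T) :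
  consistent_bk P K' ->
  meek_closure (orientK P K') G1 ->
  (forall a, a \in s -> und G1 a b) ->
  (exists D, consistent_extension D G1 /\ forall a, a \in s -> D a b) ->
  forall G3, meek_closure (orient_all G1 s b) G3 ->
  forall x y, und (orient_all G1 s b) x y -> dir G3 x y ->
  connect (dir G3) b y.
Proof.
move=> _ [_ closed] Hs _ G3 [reach _] x y u d.
have Hs' : forall a, a \in s -> adj G1 a b.
  by move=> a /Hs /andP[h _]; rewrite /adj h.
have [PA [PU PD]] := oall_props Hs'.
have F : Facts G1 (orient_all G1 s b) b (orient_all G1 s b).
  split => //.
  by move=> p q /PD [h|h]; [constructor 1|constructor 2].
have I0 : Inv (orient_all G1 s b) b (orient_all G1 s b).
  by move=> p q /andP[_ h1] /andP[_ h2]; rewrite h1 in h2.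
exact: (chain closed PU reach F I0 u d).
Qed.
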